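(* Let $F:\mathbb{R}^d\to\mathbb{R}^d$ be $L$-Lipschitz, $G:\mathbb{R}^d\rightrightarrows\mathbb{R}^d$ maximally monotone, the solution set of $0\in F(x)+G(x)$ nonempty, and suppose $x^\star$ is a solution satisfying $\langle u,x-x^\star\rangle\ge-\rho\|u\|^2$ for all $(x,u)$ in the graph of $F+G$, with $\rho>0$. Let $\eta>\rho$, $\alpha=1-\frac\rho\eta$, $x_0\in\mathbb{R}^d$, and suppose $(x_k)$ satisfies $x_{k+1}=(1-\alpha)x_k+\alpha\widetilde J_k$ for $k\ge0$, where the points $\widetilde J_k$ satisfy $\|J_{\eta(F+G)}(x_k)-\widetilde J_k\|\le\varepsilon_k$ for some $\varepsilon_k>0$. Then for $K\ge1$, $$\sum_{k=0}^{K-1}\|(\mathrm{Id}-J_{\eta(F+G)})(x_k)\|^2-\frac{2\eta^2}{(\eta-\rho)^2}\|x_0-x^\star\|^2\le6\sum_{k=0}^{K-1}\varepsilon_k^2+\frac{4\eta}{\eta-\rho}\sum_{k=0}^{K-1}\|x_k-x^\star\|\varepsilon_k,$$ and $\|x_k-x^\star\|\le\|x_{k-1}-x^\star\|+\alpha\varepsilon_{k-1}$ for $k\ge1$.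
   Context: For an operator $A$, $J_A=(\mathrm{Id}+A)^{-1}$ is its resolvent. Here $\eta$ is additionally such that the resolvent $J_{\eta(F+G)}$ is evaluated at the iterates. *)

(* Defs.v *)
From HB Require Import structures.
From mathcomp Require Import all_boot all_order all_algebra.
From mathcomp Require Import reals.
Set Implicit Arguments. Unset Strict Implicit. Unset Printing Implicit Defensive.
Import Order.TTheory GRing.Theory Num.Theory.
Local Open Scope ring_scope.

Section Defs.
Variables (R : realType) (d : nat).
Notation vec := 'rV[R]_d.

Definition dotv (u v : vec) : R := \sum_(i < d) u 0 i * v 0 i.
Definition normv (u : vec) : R := Num.sqrt (dotv u u).

(* set-valued operators are represented by their graphs: A x u  <->  u \in A(x) *)
Definition setop := vec -> vec -> Prop.

Definition lipschitz (L : R) (F : vec -> vec) : Prop :=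
  forall x y, normv (F x - F y) <= L * normv (x - y).

Definition monotone_op (A : setop) : Prop :=
  forall x y u v, A x u -> A y v -> 0 <= dotv (u - v) (x - y).

Definition maximally_monotone (A : setop) : Prop :=
  monotone_op A /\
  forall x u, (forall y v, A y v -> 0 <= dotv (u - v) (x - y)) -> A x u.

Definition sum_op (F : vec -> vec) (G : setop) : setop :=
  fun x w => exists u, G x u /\ w = F x + u.

(* p \in J_{eta A}(x) = (Id + eta A)^{-1}(x)  <->  x \in p + eta A(p) *)
Definition resolvent_rel (eta : R) (A : setop) (x p : vec) : Prop :=
  exists u, A p u /\ x = p + eta *: u.

End Defs.

(* Main.v *)
Require Import Defs.
From HB Require Import structures.
From mathcomp Require Import all_boot all_order all_algebra.
From mathcomp Require Import reals.
From mathcomp Require Import ring lra.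
Import Order.TTheory GRing.Theory Num.Theory.
Set Implicit Arguments. Unset Strict Implicit.
Local Open Scope ring_scope.

Section H.
Variables (R : realType) (d : nat).
Notation vec := 'rV[R]_d.

Lemma dotv_lin (s t : R) (b w : vec) :
  dotv (s *: b + t *: w) (s *: b + t *: w) =
  s ^+ 2 * dotv b b + 2 * s * t * dotv b w + t ^+ 2 * dotv w w.
Proof.
rewrite /dotv !mulr_sumr -!big_split /=. apply: eq_bigr => i _.
rewrite !mxE; ring.
Qed.

Lemma dotv_ge0 (b : vec) : 0 <= dotv b b.
Proof. by apply: sumr_ge0 => i _; rewrite -expr2 sqr_ge0. Qed.

Lemma normv_ge0 (b : vec) : 0 <= normv b.
Proof. exact: sqrtr_ge0. Qed.

Lemma normv_sq (b : vec) : normv b ^+ 2 = dotv b b.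
Proof. by rewrite /normv sqr_sqrtr // dotv_ge0. Qed.

Lemma dotv0 (b w : vec) : dotv b b = 0 -> dotv b w = 0.
Proof.
move=> H.
have Hs : \sum_(i < d) b 0 i ^+ 2 = 0.
  by rewrite -[RHS]H /dotv; apply: eq_bigr => j _; rewrite expr2.
have H0 := psumr_eq0P (fun i _ => (sqr_ge0 (b 0 i))) Hs.
have Hb : forall i, b 0 i = 0.
  by move=> i; apply/eqP; rewrite -sqrf_eq0; apply/eqP; apply: H0.
by rewrite /dotv big1 // => i _; rewrite Hb mul0r.
Qed.

Lemma dotvC (b w : vec) : dotv b w = dotv w b.
Proof. by rewrite /dotv; apply: eq_bigr => i _; rewrite mulrC. Qed.

Lemma cs (b w : vec) : `|dotv b w| <= normv b * normv w.
Proof.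
have [Hb|Hb] := eqVneq (dotv b b) 0.
  by rewrite dotv0 // normr0 mulr_ge0 // normv_ge0.
have [Hw|Hw] := eqVneq (dotv w w) 0.
  by rewrite dotvC dotv0 // normr0 mulr_ge0 // normv_ge0.
have nbp : 0 < normv b.
  by rewrite lt_def normv_ge0 andbT /normv sqrtr_eq0 -ltNge lt_def Hb dotv_ge0.
have nwp : 0 < normv w.
  by rewrite lt_def normv_ge0 andbT /normv sqrtr_eq0 -ltNge lt_def Hw dotv_ge0.
have h1 := dotv_ge0 (normv w *: b + normv b *: w).
have h2 := dotv_ge0 (normv w *: b + (- normv b) *: w).
rewrite dotv_lin -!normv_sq in h1.
rewrite dotv_lin -!normv_sq in h2.
set nb := normv b in h1 h2 nbp *; set nw := normv w in h1 h2 nwp *.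
set C := dotv b w in h1 h2 *.
have hp : 0 < nb * nw by rewrite mulr_gt0.
rewrite ler_norml; apply/andP; split; nra.
Qed.

Lemma tri (b w : vec) (c : R) : 0 <= c ->
  normv (b + c *: w) <= normv b + c * normv w.
Proof.
move=> c0.
have e : b + c *: w = 1 *: b + c *: w by rewrite scale1r.
have p0 : 0 <= normv b + c * normv w by rewrite addr_ge0 ?mulr_ge0 ?normv_ge0.
rewrite {1}/normv e dotv_lin -(ger0_norm p0) -sqrtr_sqr.
rewrite ler_sqrt ?sqr_ge0 // -!normv_sq.
have := cs b w; have := normv_ge0 b; have := normv_ge0 w.
rewrite ler_norml => ? ? /andP[? ?]; nra.
Qed.

Lemma normv_le (a b : vec) : dotv b b <= dotv a a -> normv b <= normv a.
Proof. by move=> h; rewrite /normv ler_sqrt // dotv_ge0. Qed.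

End H.

Lemma normvN (R : realType) (d : nat) (v : 'rV[R]_d) : normv (- v) = normv v.
Proof. by rewrite /normv /dotv; congr Num.sqrt; apply: eq_bigr => i _; rewrite !mxE; ring. Qed.

Theorem lemma3p5 (R : realType) (d : nat) (F : 'rV[R]_d -> 'rV[R]_d)
  (G : 'rV[R]_d -> 'rV[R]_d -> Prop) (L rho eta : R) (xstar : 'rV[R]_d)
  (x Jt J : nat -> 'rV[R]_d) (eps : nat -> R) :
  lipschitz L F ->
  maximally_monotone G ->
  (exists z, sum_op F G z 0) ->
  sum_op F G xstar 0 ->
  0 < rho ->
  (forall y u, sum_op F G y u -> dotv u (y - xstar) >= - rho * normv u ^+ 2) ->
  rho < eta ->
  (* J k = J_{eta(F+G)}(x k): the resolvent at the iterates is well defined *)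
  (forall k, resolvent_rel eta (sum_op F G) (x k) (J k)) ->
  (forall k p, resolvent_rel eta (sum_op F G) (x k) p -> p = J k) ->
  (forall k, 0 < eps k) ->
  (forall k, normv (J k - Jt k) <= eps k) ->
  (forall k, x k.+1 = (1 - (1 - rho / eta)) *: x k + (1 - rho / eta) *: Jt k) ->
  (forall K : nat, (1 <= K)%N ->
     \sum_(k < K) normv (x k - J k) ^+ 2
       - 2 * eta ^+ 2 / (eta - rho) ^+ 2 * normv (x 0%N - xstar) ^+ 2
     <= 6 * \sum_(k < K) eps k ^+ 2
        + 4 * eta / (eta - rho) * \sum_(k < K) normv (x k - xstar) * eps k)
  /\
  (forall k : nat, (1 <= k)%N ->
     normv (x k - xstar) <= normv (x k.-1 - xstar) + (1 - rho / eta) * eps k.-1).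
Proof.
move=> _ _ _ _ rho0 minty rhoeta res _ eps0 herr step.
have eta0 : 0 < eta by lra.
have etan0 : eta != 0 by rewrite gt_eqF.
have alE : 1 - rho / eta = (eta - rho) / eta by field.
have al0 : 0 <= 1 - rho / eta by rewrite alE divr_ge0 //; lra.
have key : forall k, normv (x k.+1 - xstar) <= normv (x k - xstar) + (1 - rho / eta) * eps k
  /\ (1 - rho / eta) ^+ 2 * normv (x k - J k) ^+ 2 <= normv (x k - xstar) ^+ 2
      - normv (x k.+1 - xstar) ^+ 2 + 2 * (1 - rho / eta) * eps k * normv (x k - xstar)
      + (1 - rho / eta) ^+ 2 * eps k ^+ 2.
  move=> k.
  case: (res k) => u [Hu Hx].
  have Hm := minty _ _ Hu.
  have ea : x k - xstar = 1 *: (J k - xstar) + eta *: u.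
    by rewrite Hx; apply/rowP => i; rewrite !mxE; ring.
  have er : x k - J k = 0 *: (J k - xstar) + eta *: u.
    by rewrite Hx; apply/rowP => i; rewrite !mxE; ring.
  have eb : x k.+1 - xstar = (1 *: (J k - xstar) + rho *: u)
                             + (1 - rho / eta) *: (Jt k - J k).
    rewrite step Hx; apply/rowP => i; rewrite !mxE; field; done.
  have hw : normv (Jt k - J k) <= eps k by rewrite -normvN opprB.
  have t1 := tri (1 *: (J k - xstar) + rho *: u) (Jt k - J k) al0.
  rewrite normv_sq dotvC in Hm.
  have U0 := dotv_ge0 u.
  set P := dotv (J k - xstar) u in Hm.
  set U := dotv u u in Hm U0.
  set Pp := dotv (J k - xstar) (J k - xstar).
  have na2 : normv (x k - xstar) ^+ 2 = 1 ^+ 2 * Pp + 2 * 1 * eta * P + eta ^+ 2 * U.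
    by rewrite normv_sq ea dotv_lin.
  have nb2 : normv (1 *: (J k - xstar) + rho *: u) ^+ 2 = 1 ^+ 2 * Pp + 2 * 1 * rho * P + rho ^+ 2 * U.
    by rewrite normv_sq dotv_lin.
  have r2 : (1 - rho / eta) ^+ 2 * normv (x k - J k) ^+ 2 = (eta - rho) ^+ 2 * U.
    rewrite normv_sq er dotv_lin alE -/U. by field.
  have h1 : 0 <= (eta - rho) * (P + rho * U) by apply: mulr_ge0; lra.
  have hh : normv (1 *: (J k - xstar) + rho *: u) ^+ 2 <= normv (x k - xstar) ^+ 2
           - (1 - rho / eta) ^+ 2 * normv (x k - J k) ^+ 2.
    rewrite -subr_ge0 na2 nb2 r2; set Q := (X in 0 <= X).
    have -> : Q = 2 * ((eta - rho) * (P + rho * U)) by rewrite /Q; ring.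
    by rewrite mulr_ge0.
  move: hh t1 hw.
  rewrite -eb.
  set nb := normv (1 *: (J k - xstar) + rho *: u).
  set a := 1 - rho / eta.
  set n0 := normv (x k - xstar). set n1 := normv (x k.+1 - xstar).
  set r := normv (x k - J k). set e := eps k. set nw := normv (Jt k - J k).
  move=> hh t1 hw.
  have nb0 : 0 <= nb := normv_ge0 _.
  have n10 : 0 <= n1 := normv_ge0 _.
  have n00 : 0 <= n0 := normv_ge0 _.
  have e0 : 0 <= e by rewrite /e; apply: ltW; apply: eps0.
  have hba : nb <= n0.
    rewrite -(ler_pXn2r (n:=2)) ?nnegrE //. have : 0 <= a ^+ 2 * r ^+ 2 by rewrite mulr_ge0 ?sqr_ge0. lra.
  have t2 : n1 <= nb + a * e by have := ler_wpM2l al0 hw; rewrite -/a; lra.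
  split; first lra.
  have : n1 ^+ 2 <= (nb + a * e) ^+ 2 by rewrite ler_pXn2r ?nnegrE //; apply: addr_ge0 => //; apply: mulr_ge0.
  have : a * e * nb <= a * e * n0 by apply: ler_wpM2l => //; apply: mulr_ge0.
  nra.
split; last first.
  by case=> // m _; exact: (key m).1.
have tel : forall K : nat,
  (1 - rho / eta) ^+ 2 * \sum_(k < K) normv (x k - J k) ^+ 2 <=
  normv (x 0%N - xstar) ^+ 2 - normv (x K - xstar) ^+ 2
  + 2 * (1 - rho / eta) * \sum_(k < K) normv (x k - xstar) * eps k
  + (1 - rho / eta) ^+ 2 * \sum_(k < K) eps k ^+ 2.
  elim=> [|K IH]; first by rewrite !big_ord0; lra.
  rewrite !big_ord_recr /= !mulrDr.
  have := (key K).2. lra.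
move=> K _.
have T := tel K.
have c0 : 0 <= (eta / (eta - rho)) ^+ 2 by rewrite sqr_ge0.
have T2 := ler_wpM2l c0 T.
have N0 : 0 <= \sum_(k < K) normv (x k - xstar) * eps k.
  by apply: sumr_ge0 => k _; apply: mulr_ge0; [exact: normv_ge0| exact: ltW].
have E0 : 0 <= \sum_(k < K) eps k ^+ 2 by apply: sumr_ge0 => k _; rewrite sqr_ge0.
have nK0 : 0 <= (eta / (eta - rho)) ^+ 2 * normv (x K - xstar) ^+ 2 by rewrite mulr_ge0 ?sqr_ge0.
have n00 : 0 <= (eta / (eta - rho)) ^+ 2 * normv (x 0%N - xstar) ^+ 2 by rewrite mulr_ge0 ?sqr_ge0.
have cpos : 0 <= eta / (eta - rho) by apply: divr_ge0; lra.
have cN : 0 <= eta / (eta - rho) * \sum_(k < K) normv (x k - xstar) * eps k by apply: mulr_ge0.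
have erm : eta - rho != 0 by apply/eqP; lra.
move: N0 E0 nK0 n00 cN T2.
set S := \sum_(k < K) normv (x k - J k) ^+ 2.
set N := \sum_(k < K) normv (x k - xstar) * eps k.
set E := \sum_(k < K) eps k ^+ 2.
set n0 := normv (x 0%N - xstar). set nK := normv (x K - xstar).
have -> : (eta / (eta - rho)) ^+ 2 * ((1 - rho / eta) ^+ 2 * S) = S by field; rewrite etan0 erm.
have -> : (eta / (eta - rho)) ^+ 2 * (n0 ^+ 2 - nK ^+ 2 + 2 * (1 - rho / eta) * N + (1 - rho / eta) ^+ 2 * E)
  = (eta / (eta - rho)) ^+ 2 * n0 ^+ 2 - (eta / (eta - rho)) ^+ 2 * nK ^+ 2 + 2 * (eta / (eta - rho) * N) + E by field; rewrite ?etan0 ?erm.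
have -> : 2 * eta ^+ 2 / (eta - rho) ^+ 2 * n0 ^+ 2 = 2 * ((eta / (eta - rho)) ^+ 2 * n0 ^+ 2) by field; rewrite ?etan0 ?erm.
have -> : 4 * eta / (eta - rho) * N = 4 * (eta / (eta - rho) * N) by field; rewrite ?etan0 ?erm.
move=> *; lra.
Qed.
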